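(* Let $\nu$ be a probability distribution on $\mathbb N_0$ and ${\mathbf T}$ a thinning matrix, and put $\nu'=\nu{\mathbf T}$. Let ${\mathbf Q}$ be a condensation matrix such that $\nu'_k{\mathbf Q}_{k,n}=\nu_n{\mathbf T}_{n,k}$ for all $k,n\in\mathbb N_0$. Then for all $n,k,i,j\in\mathbb N_0$ with $j\ge n$, $i\le j$, $i\le n$ and $\nu_n>0$, $${\mathbf T}_{n,i}{\mathbf Q}_{i,j}{\mathbf T}_{j,k}{\mathbf Q}_{k,n}={\mathbf T}_{n,k}{\mathbf Q}_{k,j}{\mathbf T}_{j,i}{\mathbf Q}_{i,n}.$$
   Context: A thinning matrix is a stochastic matrix ${\mathbf T}$ on $\mathbb N_0$ with ${\mathbf T}_{n,k}=0$ for $k>n$. A condensation matrix is a stochastic matrix ${\mathbf Q}$ on $\mathbb N_0$ with ${\mathbf Q}_{k,n}=0$ for $k>n$. $(\nu{\mathbf T})_k=\sum_n\nu_n{\mathbf T}_{n,k}$. *)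

(* Defs.v *)
From Stdlib Require Import Reals Lra Lia.
From Coquelicot Require Import Coquelicot.
Open Scope R_scope.

Definition prob_dist (nu : nat -> R) : Prop :=
  (forall n, 0 <= nu n) /\ is_series nu 1.

Definition stochastic (M : nat -> nat -> R) : Prop :=
  (forall i j, 0 <= M i j) /\ (forall i, is_series (M i) 1).

Definition thinning (T : nat -> nat -> R) : Prop :=
  stochastic T /\ (forall n k, (n < k)%nat -> T n k = 0).

Definition condensation (Q : nat -> nat -> R) : Prop :=
  stochastic Q /\ (forall k n, (n < k)%nat -> Q k n = 0).

Definition vecmat (nu : nat -> R) (T : nat -> nat -> R) (k : nat) : R :=
  Series (fun n => nu n * T n k).

(* Main.v *)
Require Import Defs.
From Stdlib Require Import Reals Lra.
From Coquelicot Require Import Coquelicot.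
Open Scope R_scope.

Theorem mainTheorem3 (nu : nat -> R) (T Q : nat -> nat -> R) :
  prob_dist nu -> thinning T -> condensation Q ->
  (forall k n, vecmat nu T k * Q k n = nu n * T n k) ->
  forall n k i j : nat,
    (n <= j)%nat -> (i <= j)%nat -> (i <= n)%nat -> 0 < nu n ->
    T n i * Q i j * T j k * Q k n = T n k * Q k j * T j i * Q i n.
Proof.
  intros _ _ _ H n k i j _ _ _ Hn.
  apply (Rmult_eq_reg_l (nu n)); [|lra].
  set (vi := vecmat nu T i). set (vk := vecmat nu T k).
  assert (E1 := H i n). assert (E2 := H k n).
  assert (E3 := H i j). assert (E4 := H k j).
  fold vi in E1, E3. fold vk in E2, E4.
  replace (nu n * (T n i * Q i j * T j k * Q k n))
    with ((nu n * T n i) * Q i j * T j k * Q k n) by ring.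
  replace (nu n * (T n k * Q k j * T j i * Q i n))
    with ((nu n * T n k) * Q k j * T j i * Q i n) by ring.
  rewrite <- E1, <- E2.
  replace (vi * Q i n * Q i j * T j k * Q k n) with (Q i n * Q k n * T j k * (vi * Q i j)) by ring.
  replace (vk * Q k n * Q k j * T j i * Q i n) with (Q i n * Q k n * T j i * (vk * Q k j)) by ring.
  rewrite E3, E4. ring.
Qed.
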